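(* Let $x$ be an integer with $0\le x\le p-1$ and $w$ a positive integer. Let $N_x$ be the least period of $(T_n^i(x)\bmod p)_{i\ge0}$ and $l_x$ the multiplicative order modulo $p$ of $T'_{n^{N_x}}(x)$. If $T_{n^{N_xl_x}}(x)\equiv x\pmod{p^w}$, then $T'_{n^{N_xl_x}}(x)\equiv 1\pmod{p^w}$ holds if and only if $n^{2\,\mathrm{ord}(n^2)}\equiv 1\pmod{p^w}$, where $\mathrm{ord}(n^2)$ is the multiplicative order of $n^2$ modulo $p$.
   Context: $p$ is a prime with $p>3$ and $n>1$ is an integer with $\gcd(n,p)=\gcd(n,p^2-1)=1$. $T_d(x)\in\mathbb{Z}[x]$ is the Chebyshev polynomial of the first kind: $T_0=1$, $T_1=x$, $T_d=2xT_{d-1}-T_{d-2}$; $T'_d$ is its derivative. $T_n^i$ is the $i$-fold composition of $T_n$ ($T_n^0(x)=x$), equal to $T_{n^i}$. The least period of $(T_n^i(x)\bmod p)_{i\ge0}$ is the least positive $N$ with $T_n^N(x)\equiv x\pmod p$. *)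

(* Defs.v *)
From HB Require Import structures.
From mathcomp Require Import all_boot all_order all_algebra.
Set Implicit Arguments. Unset Strict Implicit. Unset Printing Implicit Defensive.
Import Order.TTheory GRing.Theory Num.Theory.
Local Open Scope ring_scope.

(* Chebyshev polynomials of the first kind over Z:
   cheb_pair d = (T_d, T_{d+1}), with T_0 = 1, T_1 = X, T_{d+2} = 2 X T_{d+1} - T_d. *)
Fixpoint cheb_pair (d : nat) : {poly int} * {poly int} :=
  match d with
  | 0%N => (1, 'X)
  | d'.+1 => let (a, b) := cheb_pair d' in (b, 2%:P * 'X * b - a)
  end.

Definition chebT (d : nat) : {poly int} := (cheb_pair d).1.

Definition least_period (p n : nat) (x : int) (N : nat) : Prop :=
  (0 < N)%N /\ ((chebT (n ^ N)).[x] == x %[mod (p : int)])%Z /\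
  (forall j : nat, (0 < j < N)%N -> ~ ((chebT (n ^ j)).[x] == x %[mod (p : int)])%Z).

Definition mult_order (m : nat) (a : int) (k : nat) : Prop :=
  (0 < k)%N /\ (a ^+ k == 1 %[mod (m : int)])%Z /\
  (forall j : nat, (0 < j < k)%N -> ~ (a ^+ j == 1 %[mod (m : int)])%Z).

(* Main.v *)
Require Import Defs.
From HB Require Import structures.
From mathcomp Require Import all_boot all_order all_algebra.
From mathcomp Require Import all_solvable.
From mathcomp Require Import ring lra zify.
Import Order.TTheory GRing.Theory Num.Theory.
Local Open Scope ring_scope.
Set Implicit Arguments. Unset Strict Implicit. Unset Printing Implicit Defensive.

Lemma chebT0 : chebT 0 = 1. Proof. by []. Qed.
Lemma chebT1 : chebT 1 = 'X. Proof. by []. Qed.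
Lemma chebTSS d : chebT d.+2 = 2%:P * 'X * chebT d.+1 - chebT d.
Proof.
rewrite /chebT /=; case: (cheb_pair d) => a b /=. by [].
Qed.

Fixpoint tv (d : nat) : {poly int} * {poly int} :=
  match d with
  | 0%N => (1, 0)
  | d'.+1 => ('X * (tv d').1 + ('X^2 - 1) * (tv d').2, (tv d').1 + 'X * (tv d').2)
  end.
Definition V d := (tv d).2.

Lemma tv_ss d : (tv d.+2).1 = 2%:P * 'X * (tv d.+1).1 - (tv d).1.
Proof.
rewrite /=. set t := (tv d).1; set v := (tv d).2.
have -> : (2%:P : {poly int}) = 2 by exact: (polyC_natr _ 2).
ring.
Qed.

Lemma tvT d : (tv d).1 = chebT d.
Proof.
suff: (tv d).1 = chebT d /\ (tv d.+1).1 = chebT d.+1 by case.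
elim: d => [|d [h1 h2]]; first by split => //=; rewrite mulr1 mulr0 addr0.
by split => //; rewrite tv_ss chebTSS h1 h2.
Qed.


Notation T d := (tv d).1.

Lemma TS d : T d.+1 = 'X * T d + ('X^2 - 1) * V d. Proof. by []. Qed.
Lemma VS d : V d.+1 = T d + 'X * V d. Proof. by []. Qed.
Lemma T0 : T 0 = 1. Proof. by []. Qed.
Lemma V0 : V 0 = 0. Proof. by []. Qed.

Lemma pell d : T d ^+ 2 - ('X^2 - 1) * V d ^+ 2 = 1.
Proof.
elim: d => [|d IH]; first by rewrite T0 V0 expr1n expr0n /= mulr0 subr0.
rewrite TS VS; rewrite -[RHS]IH; ring.
Qed.

Lemma addTV a b : T (a + b) = T a * T b + ('X^2 - 1) * V a * V b /\
                  V (a + b) = T a * V b + V a * T b.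
Proof.
elim: a => [|a [IH1 IH2]].
  by rewrite add0n T0 V0; split; ring.
rewrite addSn [T (a + b).+1]TS [V (a + b).+1]VS IH1 IH2 [T a.+1]TS [V a.+1]VS; split; ring.
Qed.

Lemma TSS d : T d.+2 = 2 * 'X * T d.+1 - T d.
Proof. rewrite !TS !VS; ring. Qed.
Lemma VSS d : V d.+2 = 2 * 'X * V d.+1 - V d.
Proof. rewrite !VS !TS ?VS; ring. Qed.

Lemma T_add2 k b : T (k + b + b) = 2 * T b * T (k + b) - T k.
Proof.
have [e1 e2] := addTV (k + b) b.
have [f1 f2] := addTV k b.
rewrite e1 f1 f2; apply/eqP; rewrite -subr_eq0; apply/eqP.
transitivity (T k * (1 - (T b ^+ 2 - ('X^2 - 1) * V b ^+ 2))); first ring.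
by rewrite pell subrr mulr0.
Qed.

Lemma compT a b : T a \Po T b = T (a * b).
Proof.
suff: T a \Po T b = T (a * b) /\ T a.+1 \Po T b = T (a.+1 * b) by case.
elim: a => [|a [IH1 IH2]].
  by rewrite mul0n mul1n T0 comp_polyC TS T0 V0 mulr0 addr0 mulr1 comp_polyX.
split => //.
rewrite TSS.
have -> : (2 : {poly int}) = 2%:P by rewrite polyC_natr.
rewrite comp_polyB !comp_polyM comp_polyC comp_polyX IH1 IH2.
by rewrite !mulSnr T_add2 polyC_natr.
Qed.

Lemma derivT d : (T d)^`() = V d *+ d.
Proof.
suff: (T d)^`() = V d *+ d /\ (T d.+1)^`() = V d.+1 *+ d.+1 by case.
elim: d => [|d [IH1 IH2]].
  by rewrite T0 derivC mulr0n TS T0 V0 mulr0 addr0 mulr1 derivX VS T0 V0 mulr0 addr0.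
split => //.
have e : T d.+2 = (T d.+1 * 'X) *+ 2 - T d by rewrite TSS mulr2n; ring.
rewrite e derivB derivMn derivM derivX IH1 IH2 VSS.
have e2 : T d.+1 = 'X * V d.+1 - V d by rewrite TS VS; ring.
rewrite e2; ring.
Qed.

Lemma eval1 d : (T d).[1] = 1 /\ (V d).[1] = d%:R.
Proof.
elim: d => [|d [h1 h2]]; first by rewrite T0 V0 hornerE horner0.
rewrite TS VS !hornerE h1 h2; split; ring.
Qed.

Lemma evalN d (z : int) : (T d).[- z] = (-1) ^+ d * (T d).[z] /\
                          (V d).[- z] = - (-1) ^+ d * (V d).[z].
Proof.
elim: d => [|d [h1 h2]]; first by rewrite T0 V0 !hornerE; split; ring.
rewrite TS VS !hornerE h1 h2 !exprS; move: ((-1) ^+ d) => s; split; ring.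
Qed.

Lemma Fidc d : (1 - 'X * 'X) * ((T d)^`() * (T d)^`()) = (1 - T d * T d) *+ (d * d).
Proof.
rewrite derivT; apply/eqP; rewrite -subr_eq0; apply/eqP.
transitivity (((T d ^+ 2 - ('X^2 - 1) * V d ^+ 2) - 1) *+ (d * d)); first by rewrite !mulrnA; ring.
by rewrite pell subrr mul0rn.
Qed.

Lemma Tder_eval1 d : ((T d)^`()).[1] = (d * d)%:R.
Proof. by rewrite derivT hornerMn (eval1 d).2 -mulr_natr natrM. Qed.

Lemma ODE d : (1 - 'X * 'X) * ((T d)^`())^`() - 'X * (T d)^`() + T d *+ (d * d) = 0.
Proof.
case: d => [|d]; first by rewrite T0 -polyC1 !derivC; ring.
have H := congr1 deriv (Fidc d.+1).
rewrite !(derivM, derivB, derivMn, derivX) -!(polyC1) !derivC in H.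
set t1 := (T d.+1)^`() in H *; set t2 := t1^`() in H *.
have H2 : (t1 * ((1 - 'X * 'X) * t2 - 'X * t1 + T d.+1 *+ (d.+1 * d.+1))) *+ 2 = 0.
  apply/eqP; rewrite -subr_eq0 subr0; apply/eqP.
  rewrite -polyC1 in H *.
  move: H; set A := (X in X = _ -> _); set B := (X in _ = X -> _) => H.
  transitivity (A - B); first by rewrite /A /B /t2; ring.
  by rewrite H subrr.
move: H2; rewrite -mulr_natr; move/eqP; rewrite !mulf_eq0 => /orP[/orP[]|].
- move=> /eqP t10; have := Tder_eval1 d.+1; rewrite -/t1 t10 horner0 => /eqP.
  by rewrite eq_sym pnatr_eq0.
- by move/eqP.
- by rewrite -polyC_natr polyC_eq0.
Qed.


Section NatPart.
Local Open Scope nat_scope.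
Lemma legendre_sum (p : nat) : (4 < p)%N -> forall N m, (0 < m)%N ->
  (4 * \sum_(1 <= k < N) m %/ p ^ k < m)%N.
Proof.
move=> p4; elim=> [|N IH] m m0.
  by rewrite big_geq.
case: N IH => [|N] IH; first by rewrite big_geq.
rewrite big_nat_recl //.
have -> : \sum_(1 <= i < N.+1) m %/ p ^ i.+1 = \sum_(1 <= i < N.+1) (m %/ p) %/ p ^ i.
  by apply: eq_bigr => i _; rewrite expnS divnMA.
have hq : (p * (m %/ p) <= m)%N by rewrite mulnC leq_divM.
case q0: (m %/ p) => [|q].
  by rewrite big1 ?addn0 ?muln0 // => i _; exact: div0n.
have := IH q.+1 isT; rewrite q0 in hq; nia.
Qed.

Lemma logn_fact_bound (p m : nat) : prime p -> (4 < p)%N -> (0 < m)%N ->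
  (4 * logn p m`! < m)%N.
Proof. by move=> pp p4 m0; rewrite logn_fact //; exact: legendre_sum. Qed.
End NatPart.

Section Core.
Variable d : nat.
Definition Pp : {poly int} := T d \Po (1 - 'X).

Lemma Pp_horner y : Pp.[y] = (T d).[1 - y].
Proof. by rewrite /Pp horner_comp !hornerE. Qed.

Lemma Pp_deriv : Pp^`() = - ((T d)^`() \Po (1 - 'X)).
Proof. by rewrite /Pp deriv_comp derivB derivX -polyC1 derivC sub0r mulrN1. Qed.

Lemma Pp_deriv2 : Pp^`()^`() = ((T d)^`())^`() \Po (1 - 'X).
Proof.
by rewrite Pp_deriv derivN deriv_comp derivB derivX -polyC1 derivC sub0r mulrN1 opprK.
Qed.

Lemma Pp_ODE : (Pp^`()^`() * 'X) *+ 2 - (Pp^`()^`() * 'X) * 'X + Pp^`()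
   - Pp^`() * 'X + Pp *+ (d * d) = 0.
Proof.
have H0 := ODE d; rewrite -mulr_natr -polyC_natr -polyC1 in H0.
have H := congr1 (fun q => q \Po (1 - 'X)) H0; move: H => /=.
rewrite comp_poly0 !(comp_polyB, comp_polyD, comp_polyM, comp_polyX, comp_polyC).
rewrite polyC1 polyC_natr mulr_natr.
have e1 : (T d)^`() \Po (1 - 'X) = - Pp^`() by rewrite Pp_deriv opprK.
rewrite -Pp_deriv2 e1 -/Pp => H.
rewrite -[RHS]H; ring.
Qed.

Lemma crec k : Pp`_k.+1 * (k.+1 * (2 * k).+1)%:R = Pp`_k * ((k * k)%:R - (d * d)%:R).
Proof.
have H := congr1 (fun q : {poly int} => q`_k) Pp_ODE; move: H => /=.
rewrite coef0 !(coefD, coefB, coefN, coefMn, coefMX, coef_deriv).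
case: k => [|[|k]] /= H.
- by apply/eqP; rewrite -subr_eq0; apply/eqP; rewrite -[RHS]H; ring.
- by apply/eqP; rewrite -subr_eq0; apply/eqP; rewrite -[RHS]H; ring.
- by apply/eqP; rewrite -subr_eq0; apply/eqP; rewrite -[RHS]H; ring.
Qed.

Lemma c0 : Pp`_0 = 1.
Proof. by rewrite -horner_coef0 Pp_horner subr0 (eval1 d).1. Qed.

Lemma c1 : Pp`_1 = - (d * d)%:R.
Proof.
have := horner_coef0 (Pp^`()); rewrite coef_deriv mulr1n => <-.
rewrite Pp_deriv hornerN horner_comp -Tder_eval1; congr (- _); congr (_.[_]); rewrite !hornerE; ring.
Qed.

Variable p : nat.
Definition fk k : int := Pp`_k * (p%:R) ^+ k.
Definition gk k : int := ((2 * k)`!)%:R * fk k.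

Lemma grec k : gk k.+1 = 2 * p%:R * ((k * k)%:R - (d * d)%:R) * gk k.
Proof.
rewrite /gk /fk.
have -> : (2 * k.+1 = (2 * k).+2)%N by rewrite mulnS.
rewrite !factS !natrM exprS.
transitivity (2 * p%:R * ((2 * k)`!)%:R * p%:R ^+ k * (Pp`_k.+1 * (k.+1 * (2 * k).+1)%:R)).
  rewrite natrM; ring.
rewrite crec; ring.
Qed.

Lemma gdiv j : ((p%:R) ^+ j.+2 * ((d * d)%:R - 1) %| gk j.+2)%Z.
Proof.
elim: j => [|j IH].
  apply/dvdzP; exists (4 * (d * d)%:R).
  rewrite grec grec /gk /fk c0 /= fact0 mul1r expr0 mulr1; ring.
case/dvdzP: IH => q Hq; apply/dvdzP.
exists (2 * ((j.+2 * j.+2)%:R - (d * d)%:R) * q).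
rewrite grec Hq (exprS _ j.+2). move: (p%:R ^+ j.+2 : int) => e; ring.
Qed.


Lemma fdiv u k : prime p -> (4 < p)%N -> ((p%:R) ^+ u %| (d * d)%:R - 1)%Z ->
  (2 <= k)%N -> ((p%:R) ^+ (u + 2) %| fk k)%Z.
Proof.
move=> pp p4 hu k2.
have [j ->] : exists j, k = j.+2 by exists (k - 2)%N; lia.
have hg2 : ((p%:R) ^+ (j.+2 + u) %| gk j.+2)%Z.
  apply: dvdz_trans (gdiv j); rewrite exprD; exact: dvdz_mul (dvdzz _) hu.
have [m cm hF] := pfactor_coprime pp (fact_gt0 (2 * j.+2)).
have ha : (4 * logn p (2 * j.+2)`! < 2 * j.+2)%N by apply: logn_fact_bound.
move: hg2; rewrite /gk hF natrM natrX.
set a := logn p (2 * j.+2)`! in ha *.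
have -> : (j.+2 + u = a + (j.+2 + u - a))%N by lia.
rewrite exprD (mulrC (m%:R)) -mulrA dvdz_mul2l; last first.
  by rewrite expf_neq0 // natz; apply/eqP; case => p0; rewrite p0 in pp.
rewrite Gauss_dvdzr; last first.
  by apply: coprimezXl; rewrite coprimezE !natz /=.
move/(dvdz_trans _); apply; apply: dvdz_exp2l; lia.
Qed.

Lemma hsum : Pp.[p%:R] = 1 - (d * d)%:R * p%:R + \sum_(i < size Pp) fk i.+2.
Proof.
have hs : (size Pp <= (size Pp).+2)%N by lia.
rewrite (horner_coef_wide _ hs) !big_ord_recl c0 c1 /fk /=.
rewrite /bump !leq0n !add1n.
rewrite expr0 expr1; ring.
Qed.


Lemma hsumD : (Pp^`()).[p%:R] = - (d * d)%:R +
   \sum_(i < size Pp^`()) Pp`_i.+2 *+ i.+2 * p%:R ^+ i.+1.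
Proof.
have hs : (size Pp^`() <= (size Pp^`()).+1)%N by lia.
rewrite (horner_coef_wide _ hs) big_ord_recl coef_deriv c1 /=.
rewrite mulr1n; congr (_ + _); first by rewrite expr0 mulr1.
apply: eq_bigr => i _; by rewrite /bump leq0n add1n coef_deriv.
Qed.

Lemma coreK w : prime p -> (4 < p)%N -> (0 < w)%N ->
  ((p%:R) ^+ w %| (T d).[1 - p%:R] - (1 - p%:R))%Z ->
  ((p%:R) ^+ w %| ((T d)^`()).[1 - p%:R] - (d * d)%:R)%Z.
Proof.
move=> pp p4 w0 H.
have p0 : (p%:R : int) != 0 by rewrite natz; apply/eqP; case=> e; rewrite e in pp.
rewrite -Pp_horner hsum in H.
have hD : forall u, (u <= w.-1)%N -> ((p%:R) ^+ u %| (d * d)%:R - 1)%Z.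
  elim=> [|u IH] hu; first by rewrite expr0 dvd1z.
  have IH' := IH (ltnW hu).
  have hR : ((p%:R) ^+ (u + 2) %| \sum_(i < size Pp) fk i.+2)%Z.
    by apply: rpred_sum => i _; apply: fdiv.
  have hW : ((p%:R) ^+ (u + 2) %| (p%:R) ^+ w)%Z by apply: dvdz_exp2l; lia.
  have h1 := dvdz_trans hW H.
  have h2 : ((p%:R) ^+ (u + 2) %| ((d * d)%:R - 1) * p%:R)%Z.
    have -> : ((d * d)%:R - 1) * p%:R = \sum_(i < size Pp) fk i.+2 -
       (1 - (d * d)%:R * p%:R + \sum_(i < size Pp) fk i.+2 - (1 - p%:R)) by ring.
    exact: rpredB.
  by move: h2; rewrite addn2 exprSr dvdz_mul2r.
have hDw := hD w.-1 (leqnn _).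
have hfk : forall i, ((p%:R) ^+ w %| Pp`_i.+2 *+ i.+2 * p%:R ^+ i.+1)%Z.
  move=> i; have := @fdiv (w.-1) (i.+2) pp p4 hDw isT.
  have -> : (w.-1 + 2 = w.+1)%N by lia.
  rewrite /fk (exprSr _ w) => h.
  rewrite -(dvdz_mul2r p0).
  have -> : Pp`_i.+2 *+ i.+2 * p%:R ^+ i.+1 * p%:R =
     (i.+2)%:R * (Pp`_i.+2 * p%:R ^+ i.+2) by rewrite (exprSr _ i.+1); ring.
  exact: dvdz_mull.
have hT : ((T d)^`()).[1 - p%:R] = - (Pp^`()).[p%:R].
  by rewrite Pp_deriv hornerN horner_comp !hornerE opprK.
rewrite hT hsumD.
set S := \sum_(i < _) _.
have -> : - (- (d * d)%:R + S) - (d * d)%:R = - S by ring.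
rewrite rpredN; apply: rpred_sum => i _; exact: hfk.
Qed.

End Core.


Lemma poly_cong (q : {poly int}) (m a b : int) :
  (m %| a - b)%Z -> (m %| q.[a] - q.[b])%Z.
Proof.
move=> hab; elim/poly_ind: q => [|q c IH]; first by rewrite !horner0 subr0 dvdz0.
rewrite !hornerMXaddC.
have -> : q.[a] * a + c - (q.[b] * b + c) = (q.[a] - q.[b]) * a + q.[b] * (a - b) by ring.
by apply: rpredD; [apply: dvdz_mulr | apply: dvdz_mull].
Qed.

Lemma dvdz_mulB (m a1 a2 b1 b2 : int) :
  (m %| a1 - b1)%Z -> (m %| a2 - b2)%Z -> (m %| a1 * a2 - b1 * b2)%Z.
Proof.
move=> h1 h2.
have -> : a1 * a2 - b1 * b2 = (a1 - b1) * a2 + b1 * (a2 - b2) by ring.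
by apply: rpredD; [apply: dvdz_mulr | apply: dvdz_mull].
Qed.

Lemma dvdz_trB (m a b c : int) :
  (m %| a - b)%Z -> (m %| b - c)%Z -> (m %| a - c)%Z.
Proof.
move=> h1 h2; have -> : a - c = (a - b) + (b - c) by ring.
exact: rpredD.
Qed.

Lemma dvdz_symB (m a b : int) : (m %| a - b)%Z -> (m %| b - a)%Z.
Proof. by move=> h; rewrite (_ : b - a = - (a - b)) ?rpredN //; ring. Qed.

Lemma dvdz_XB (m a b : int) k : (m %| a - b)%Z -> (m %| a ^+ k - b ^+ k)%Z.
Proof.
move=> h; elim: k => [|k IH]; first by rewrite !expr0 subrr dvdz0.
by rewrite !exprS; apply: dvdz_mulB.
Qed.

Lemma iterT_comp n j : T (n ^ j.+1) = T n \Po T (n ^ j).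
Proof. by rewrite compT expnS. Qed.

Lemma iter_cong (m : int) n (x : int) j :
  (m %| (T n).[x] - x)%Z -> (m %| (T (n ^ j)).[x] - x)%Z.
Proof.
move=> h; elim: j => [|j IH]; first by rewrite expn0 TS T0 V0 mulr0 addr0 mulr1 hornerX subrr dvdz0.
rewrite iterT_comp horner_comp; apply: dvdz_trB h.
exact: poly_cong.
Qed.

Lemma iter_deriv_cong (m : int) n (x : int) j :
  (m %| (T n).[x] - x)%Z ->
  (m %| ((T (n ^ j))^`()).[x] - ((T n)^`()).[x] ^+ j)%Z.
Proof.
move=> h; elim: j => [|j IH].
  by rewrite expn0 expr0 TS T0 V0 mulr0 addr0 mulr1 derivX hornerC subrr dvdz0.
rewrite iterT_comp deriv_comp hornerM horner_comp exprS.
apply: dvdz_mulB => //.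
exact: poly_cong (iter_cong _ h).
Qed.

Lemma pz_neq0 (p : nat) : prime p -> (p%:Z != 0).
Proof. by move=> pp; apply/eqP; case=> e; rewrite e in pp. Qed.

Lemma nat_modz_abs (a : int) (p : nat) : prime p ->
  ((`|(a %% p%:Z)%Z|%N)%:Z = (a %% p%:Z)%Z) /\ (`|(a %% p%:Z)%Z|%N < p)%N.
Proof.
move=> pp; have p0 := pz_neq0 pp.
have h0 := modz_ge0 a p0.
have h1 : (a %% p%:Z)%Z < p%:Z by apply: ltz_pmod; rewrite ltz_nat prime_gt0.
split; first by rewrite gez0_abs.
by rewrite -ltz_nat gez0_abs.
Qed.

Lemma order_lt_p (p : nat) (a : int) l : prime p -> mult_order p a l -> (l < p)%N.
Proof.
move=> pp [l0 [ha hmin]].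
have [hb hbp] := nat_modz_abs a pp.
set b := `|(a %% p%:Z)%Z|%N in hb hbp.
have pa : b != 0%N.
  apply/eqP => b0; move: ha; rewrite eqz_mod_dvd => ha.
  have : (p%:Z %| a)%Z by apply/dvdz_mod0P; rewrite -hb b0.
  move/(dvdz_exp l0) => h2.
  have h3 : (p%:Z %| a ^+ l - (a ^+ l - 1))%Z by exact: rpredB.
  have e3 : a ^+ l - (a ^+ l - 1) = 1 by ring.
  by move: h3; rewrite e3 dvdz1 /= => /eqP p1; rewrite p1 in pp.
have cb : coprime b p.
  rewrite coprime_sym prime_coprime //; apply/negP => /dvdn_leq; lia.
have := Euler_exp_totient cb; rewrite totient_prime // => he.
have hap : (a ^+ p.-1 == 1 %[mod p%:Z])%Z.
  apply/eqP; rewrite -modzXm -hb.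
  have -> : (b%:Z) ^+ p.-1 = ((b ^ p.-1)%N)%:Z by rewrite -[RHS]natz natrX natz.
  rewrite modz_nat he; symmetry; exact: (modz_nat 1 p).
have p1 := prime_gt1 pp.
case: (ltnP p.-1 l) => hl; last by clear -p1 hl; lia.
exfalso; apply: (hmin p.-1 _ hap).
apply/andP; split; clear -p1 hl; lia.
Qed.

Section Period.
Variables (p n : nat) (x : int) (N : nat).
Hypothesis pp : prime p.
Hypothesis N0 : (0 < N)%N.
Hypothesis hN : (p%:Z %| (T (n ^ N)).[x] - x)%Z.
Hypothesis hmin : forall j, (0 < j < N)%N -> ~ (p%:Z %| (T (n ^ j)).[x] - x)%Z.
Hypothesis x1 : ~ (p%:Z %| x - 1)%Z.

Let s j := (T (n ^ j)).[x].

Lemma s_succ j : s j.+1 = (T n).[s j].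
Proof. by rewrite /s iterT_comp horner_comp. Qed.

Lemma shift i j t : (p%:Z %| s i - s j)%Z -> (p%:Z %| s (i + t) - s (j + t))%Z.
Proof.
move=> h; elim: t => [|t IH]; first by rewrite !addn0.
by rewrite !addnS !s_succ; apply: poly_cong.
Qed.

Lemma distinct i j : (i < j < N)%N -> ~ (p%:Z %| s i - s j)%Z.
Proof.
case/andP=> ij jN h.
have := @shift i j (N - j)%N h; rewrite subnKC ?(ltnW jN) // => h2.
apply: (hmin (j := (i + (N - j))%N)).
  by apply/andP; split; lia.
by apply: dvdz_trB h2 hN.
Qed.

Lemma avoid1 j : (j < N)%N -> ~ (p%:Z %| s j - 1)%Z.
Proof.
move=> jN h.
have h1 : forall t, (p%:Z %| s (j + t) - 1)%Z.
  elim=> [|t IH]; first by rewrite addn0.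
  rewrite addnS s_succ -(eval1 n).1; exact: poly_cong.
apply: x1; apply: dvdz_trB (dvdz_symB hN) _.
by have := h1 (N - j)%N; rewrite subnKC // ltnW.
Qed.

Lemma period_lt : (N < p)%N.
Proof.
have p1 := prime_gt1 pp.
pose r j := `|(s j %% p%:Z)%Z|%N.
have hr : forall j, (r j)%:Z = (s j %% p%:Z)%Z /\ (r j < p)%N.
  by move=> j; apply: nat_modz_abs.
have rinj : {in iota 0 N &, injective r}.
  move=> i j; rewrite !mem_iota !add0n => iN jN rij.
  have hij : (p%:Z %| s i - s j)%Z.
    by rewrite -eqz_mod_dvd; apply/eqP; rewrite -(hr i).1 -(hr j).1 rij.
  case: (ltngtP i j) => // [ij|ji].
    by exfalso; apply: (distinct (i := i) (j := j)); rewrite ?ij.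
  by exfalso; apply: (distinct (i := j) (j := i)); rewrite ?ji // dvdz_symB.
have hu : uniq (map r (iota 0 N)) by rewrite map_inj_in_uniq // iota_uniq.
have hs : {subset map r (iota 0 N) <= rem 1%N (iota 0 p)}.
  move=> y /mapP [j]; rewrite mem_iota add0n => /andP [_ jN] ->.
  rewrite (mem_rem_uniq _ (iota_uniq 0 p)) inE mem_iota add0n (hr j).2 leq0n andbT /=.
  rewrite andbT; apply/negP => /eqP rj1; apply: (avoid1 jN).
  rewrite -eqz_mod_dvd; apply/eqP; rewrite -(hr j).1 rj1 modz_small //.
have := uniq_leq_size hu hs.
rewrite size_map size_iota size_rem ?size_iota; last by rewrite mem_iota; lia.
lia.
Qed.

End Period.

Lemma order_dvd (p : nat) (a : int) o e : mult_order p a o ->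
  (p%:Z %| a ^+ e - 1)%Z -> (o %| e)%N.
Proof.
move=> [o0 [ho hmin]] he.
rewrite eqz_mod_dvd in ho.
have hq : (p%:Z %| a ^+ (e %% o) - 1)%Z.
  move: he; rewrite {1}(divn_eq e o) (mulnC (e %/ o)%N) exprD exprM => he.
  have h1 : (p%:Z %| (a ^+ o) ^+ (e %/ o) - 1 ^+ (e %/ o))%Z by apply: dvdz_XB.
  rewrite expr1n in h1.
  have -> : a ^+ (e %% o) - 1 = ((a ^+ o) ^+ (e %/ o) * a ^+ (e %% o) - 1)
     - ((a ^+ o) ^+ (e %/ o) - 1) * a ^+ (e %% o) by ring.
  by apply: rpredB he _; apply: dvdz_mulr h1.
case: (posnP (e %% o)%N) => [h0|hpos]; first by rewrite /dvdn h0.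
exfalso; apply: (hmin (e %% o)%N); last by rewrite eqz_mod_dvd.
by apply/andP; split => //; exact: ltn_pmod.
Qed.

Lemma lift_lemma (p w k : nat) (A : int) : prime p -> ~~ (p %| k)%N ->
  (p%:Z %| A - 1)%Z -> ((p%:Z) ^+ w %| A ^+ k - 1)%Z -> ((p%:Z) ^+ w %| A - 1)%Z.
Proof.
move=> pp pk hA hAk.
move: hAk; rewrite -(expr1n _ k) subrXX expr1n.
set S := \sum_(i < k) _.
have gen : forall (g : nat -> nat) m,
    (p%:Z %| \sum_(i < m) A ^+ (g i) * 1 ^+ i - m%:R)%Z.
  move=> g; elim=> [|m IH]; first by rewrite big_ord0 subrr dvdz0.
  rewrite big_ord_recr /= -addn1 natrD.
  set S1 := \sum_(i < m) _.
  have -> : S1 + A ^+ g m * 1 ^+ m - (m%:R + 1%:R) = (S1 - m%:R) + (A ^+ g m * 1 ^+ m - 1) by ring.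
  apply: rpredD => //; rewrite expr1n mulr1; have := dvdz_XB (g m) hA; by rewrite expr1n.
have hS : (p%:Z %| S - k%:R)%Z by exact: (gen (fun i => (k.-1 - i)%N) k).
have cS : coprimez ((p%:Z) ^+ w) S.
  apply: coprimezXl; rewrite coprimezE /= prime_coprime //.
  apply/negP => hpS; move/negP: pk; apply.
  have h1 : (p%:Z %| S)%Z by rewrite dvdzE.
  have h2 : (p%:Z %| S - (S - k%:R))%Z by exact: rpredB.
  by move: h2; rewrite (_ : S - (S - k%:R) = k%:R) ?natz ?dvdzE //; ring.
by rewrite Gauss_dvdzl.
Qed.

Lemma sq_lemma (p w : nat) (t e : int) : prime p -> (3 < p)%N ->
  ((p%:Z) ^+ w %| t * t - e)%Z -> (p%:Z %| t - 1)%Z ->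
  (((p%:Z) ^+ w %| t - 1)%Z <-> ((p%:Z) ^+ w %| e - 1)%Z).
Proof.
move=> pp p3 h1 h2; split => h.
  have -> : e - 1 = (t - 1) * (t + 1) - (t * t - e) by ring.
  by apply: rpredB => //; apply: dvdz_mulr.
have h3 : ((p%:Z) ^+ w %| (t - 1) * (t + 1))%Z.
  have -> : (t - 1) * (t + 1) = (t * t - e) + (e - 1) by ring.
  exact: rpredD.
move: h3; rewrite Gauss_dvdzl //.
apply: coprimezXl; rewrite coprimezE /= prime_coprime //.
apply/negP => hpt.
have h4 : (p%:Z %| (t + 1) - (t - 1))%Z by apply: rpredB => //; rewrite dvdzE.
have e2 : (t + 1) - (t - 1) = 2%:Z by ring.
move: h4; rewrite e2 dvdzE /= => /dvdn_leq; lia.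
Qed.

Lemma eq_lemma (P t e : int) : (P %| t - e)%Z ->
  ((P %| t - 1)%Z <-> (P %| e - 1)%Z).
Proof.
move=> h; split => h2.
  by apply: dvdz_trB (dvdz_symB h) h2.
by apply: dvdz_trB h h2.
Qed.

Lemma generic_sq (P x Tx t e : int) : coprimez P (1 - x * x) -> (P %| Tx - x)%Z ->
  (1 - x * x) * (t * t) = (1 - Tx * Tx) * e -> (P %| t * t - e)%Z.
Proof.
move=> cP h hid.
rewrite -(Gauss_dvdzr _ cP).
have -> : (1 - x * x) * (t * t - e) = - ((Tx - x) * ((x + Tx) * e)).
  by rewrite mulrBr hid; ring.
by rewrite rpredN; apply: dvdz_mulr.
Qed.

Lemma nat_pos_ndvd (p m : nat) : (0 < m < p)%N -> ~~ (p %| m)%N.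
Proof. move=> /andP [m0 mp]; apply/negP => /dvdn_leq; lia. Qed.


Lemma natzX (m j : nat) : ((m ^ j)%N : int) = (m%:Z) ^+ j.
Proof. by rewrite -[LHS]natz natrX natz. Qed.

Unset Implicit Arguments.
Theorem lemma13 (p n x w Nx lx ordn2 : nat) :
  prime p -> (3 < p)%N -> (1 < n)%N ->
  coprime n p -> coprime n (p ^ 2 - 1) ->
  (x <= p - 1)%N -> (0 < w)%N ->
  least_period p n (x : int) Nx ->
  mult_order p ((chebT (n ^ Nx))^`()).[x : int] lx ->
  mult_order p ((n ^ 2)%N : int) ordn2 ->
  ((chebT (n ^ (Nx * lx))).[x : int] == (x : int) %[mod ((p ^ w)%N : int)])%Z ->
  (((chebT (n ^ (Nx * lx)))^`()).[x : int] == 1 %[mod ((p ^ w)%N : int)])%Z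
  <-> (((n ^ (2 * ordn2))%N : int) == 1 %[mod ((p ^ w)%N : int)])%Z.
Proof.
move=> pp p3 n1 cnp cnp2 xp w0 [N0 [hN hminN]] hlx ho hT.
have pw : ((p ^ w)%N : int) = (p%:Z) ^+ w by rewrite -[LHS]natz natrX natz.
rewrite !eqz_mod_dvd pw -!tvT.
rewrite eqz_mod_dvd pw -tvT in hT.
rewrite eqz_mod_dvd -tvT in hN.
have hminN' : forall j, (0 < j < Nx)%N -> ~ (p%:Z %| (T (n ^ j)).[x%:Z] - x%:Z)%Z.
  by move=> j hj; rewrite -eqz_mod_dvd tvT; exact: hminN.
have hl0 := hlx; case: hlx => l0 [hl hminl].
rewrite eqz_mod_dvd -tvT in hl.
set d := (n ^ (Nx * lx))%N in hT *.
set t := ((T d)^`()).[x%:Z].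
set e : int := (d * d)%:R.
have pw1 : (p%:Z %| (p%:Z) ^+ w)%Z by apply: dvdz_exp.
have ht1 : (p%:Z %| t - 1)%Z.
  have := iter_deriv_cong lx hN; rewrite -expnM -/d -/t => h.
  by apply: dvdz_trB h hl.
have [key hpe] : ((((p%:Z) ^+ w %| t - 1)%Z <-> ((p%:Z) ^+ w %| e - 1)%Z)
                  /\ (p%:Z %| e - 1)%Z).
  case: (eqVneq x 1%N) => [x1|xn1].
    have htE : t = e by rewrite /t x1; exact: Tder_eval1.
    split; first by apply: eq_lemma; rewrite htE subrr dvdz0.
    by rewrite -htE.
  case: (eqVneq x (p - 1)%N) => [xp1|xnp].
    have podd : odd p.
      by case: (even_prime pp) => // p2; rewrite p2 in p3.
    have nodd : odd n.
      apply/negPn/negP => hn.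
      have h2n : (2 %| n)%N by rewrite dvdn2.
      have := coprime_dvdl h2n cnp2; rewrite prime_coprime // dvdn2 oddB.
        by rewrite oddX podd orbT.
      by rewrite expn_gt0 prime_gt0.
    have dodd : odd d by rewrite /d oddX nodd orbT.
    have sgn : (-1) ^+ d = -1 :> int by rewrite -signr_odd dodd expr1.
    set z : int := 1 - p%:Z.
    have hx : x%:Z = - z.
      rewrite /z xp1 -subzn; [ring | exact: prime_gt0].
    have hTz : ((p%:Z) ^+ w %| (T d).[z] - z)%Z.
      move: hT; rewrite hx (evalN d z).1 sgn.
      by rewrite (_ : -1 * (T d).[z] - - z = - ((T d).[z] - z)) ?rpredN //; ring.
    have p4 : (4 < p)%N.
      by case: (ltngtP p 4) p3 => // p4; rewrite p4 in pp.
    have hc := @coreK d p w pp p4 w0.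
    rewrite !natz in hc.
    have ht : t = ((T d)^`()).[z].
      rewrite /t hx !derivT !hornerMn (evalN d z).2 sgn; ring.
    have htE : ((p%:Z) ^+ w %| t - e)%Z by rewrite ht /e natz; exact: hc hTz.
    split; first exact: eq_lemma.
    have := dvdz_trans pw1 htE => h.
    by apply: dvdz_trB (dvdz_symB h) ht1.
  have hcop : coprimez ((p%:Z) ^+ w) (1 - x%:Z * x%:Z).
    apply: coprimezXl; rewrite coprimezE /= prime_coprime //.
    have [x0|xpos] := posnP x.
      by rewrite x0 mulr0 subr0 /= dvdn1; apply/eqP => p1; rewrite p1 in pp.
    have ex : 1 - x%:Z * x%:Z = - (((x.-1) * x.+1)%N)%:Z.
      rewrite (_ : x.+1 = x.-1.+2); last by rewrite prednK.
      rewrite -{1 2}(prednK xpos) -!natz; ring.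
    rewrite ex abszN absz_nat Euclid_dvdM // negb_or !nat_pos_ndvd //.
      by apply/andP; split; clear -xp xnp; lia.
    by apply/andP; split; clear -xp xn1 xpos; lia.
  have hid : (1 - x%:Z * x%:Z) * (t * t) = (1 - (T d).[x%:Z] * (T d).[x%:Z]) * e.
    have := congr1 (fun q : {poly int} => q.[x%:Z]) (Fidc d).
    by rewrite /= !(hornerM, hornerD, hornerN, hornerX, hornerMn, hornerC) -mulr_natr.
  have hsq := generic_sq hcop hT hid.
  split; first exact: sq_lemma.
  have := dvdz_trans pw1 hsq => h.
  have -> : e - 1 = (t - 1) * (t + 1) - (t * t - e) by ring.
  by apply: rpredB => //; apply: dvdz_mulr.
rewrite key.
have hNp : (Nx < p)%N.
  case: (eqVneq x 1%N) => [x1|x1].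
    case: (ltnP 1 Nx) => hN1; last by move: (prime_gt1 pp); clear -hN1; lia.
    exfalso; apply: (hminN' 1%N); first by rewrite hN1.
    by rewrite expn1 x1 (eval1 n).1 subrr dvdz0.
  apply: (period_lt pp N0 hN hminN').
  move=> hx1.
  have [x0|xpos] := posnP x.
    by move: hx1; rewrite x0 sub0r rpredN dvdzE /= dvdn1 => /eqP p1; rewrite p1 in pp.
  have ex : x%:Z - 1 = (x.-1)%:Z by rewrite -{1}(prednK xpos) -addn1 PoszD addrK.
  move: hx1; rewrite ex dvdzE /= => hx.
  have : ~~ (p %| x.-1)%N by apply: nat_pos_ndvd; clear -x1 xp xpos; lia.
  by rewrite hx.
have hlp : (lx < p)%N := order_lt_p pp hl0.
have hpNl : ~~ (p %| Nx * lx)%N.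
  rewrite Euclid_dvdM // negb_or !nat_pos_ndvd //; apply/andP; split => //; clear -l0 N0; lia.
have he : e = (((n ^ 2)%N)%:Z) ^+ (Nx * lx).
  by rewrite /e /d natz -natzX -expnM mul2n -addnn expnD.
have hodvd : (ordn2 %| Nx * lx)%N by apply: (order_dvd ho); rewrite -he.
set k := (Nx * lx %/ ordn2)%N.
have hk : (Nx * lx = k * ordn2)%N by rewrite divnK.
have hpk : ~~ (p %| k)%N.
  by apply: contra hpNl; rewrite hk; apply: dvdn_mulr.
case: ho => o0 [hA _]; rewrite eqz_mod_dvd in hA.
have eA : (((n ^ (2 * ordn2))%N)%:Z) = (((n ^ 2)%N)%:Z) ^+ ordn2 by rewrite -natzX -expnM.
rewrite eA; rewrite -eA in hA.
have heA : e = (((n ^ (2 * ordn2))%N)%:Z) ^+ k by rewrite he hk mulnC exprM eA.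
rewrite heA -eA; split => h.
  by apply: lift_lemma pp hpk hA h.
by have := dvdz_XB k h; rewrite expr1n.
Qed.
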